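(* Let $Z\in\mathbb{R}^{n\times a}$ and $W\in\mathbb{R}^{a\times b}$, and $\Phi=ZW$. Let $\Sigma_Z=\frac1n Z^\top Z$ and let $W=QS$ be the right polar decomposition of $W$, where $Q\in\mathbb{R}^{a\times b}$ has orthonormal columns and $S=(W^\top W)^{1/2}$. Let $\eta_1\ge\cdots\ge\eta_d>0$ be the positive eigenvalues of $Q^\top\Sigma_Z Q$, with $d=\operatorname{rank}(Q^\top\Sigma_ZQ)\ge 1$, and for $\delta\in[0,1]$ let $\mathrm{srank}_\delta(\Phi)=\min\{k:\ \sum_{i=1}^k\sigma_i(\Phi)/\sum_{i=1}^d\sigma_i(\Phi)\ge 1-\delta\}$, where $\sigma_1(\Phi)\ge\cdots\ge\sigma_d(\Phi)$ are the nonzero singular values of $\Phi$. If $\varepsilon=\sqrt{\mathrm{DfI}(W)}<1$, then \[ \mathrm{srank}_\delta(\Phi)\ge\left\lceil\frac{(1-\delta)d}{\delta\sqrt{\frac{1+\varepsilon}{1-\varepsilon}}\sqrt{\frac{\eta_1}{\eta_d}}+(1-\delta)}\right\rceil . \] If additionally $\Sigma_Z=I$, then \[ \mathrm{srank}_\delta(\Phi)\ge\left\lceil\frac{(1-\delta)d}{\delta\sqrt{\frac{1+\varepsilon}{1-\varepsilon}}+(1-\delta)}\right\rceil . \]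
   Context: $\mathrm{DfI}(W)=\|W^\top W-I\|_F^2$ (Deviation from Isometry), with $\|\cdot\|_F$ the Frobenius norm. $\lceil\cdot\rceil$ is the ceiling function. *)

(* Defs.v *)
From HB Require Import structures.
From mathcomp Require Import all_boot all_order all_algebra.
From mathcomp Require Import reals.
Set Implicit Arguments. Unset Strict Implicit. Unset Printing Implicit Defensive.
Import Order.TTheory GRing.Theory Num.Theory.
Local Open Scope ring_scope.

Section Defs.
Variable R : realType.

Definition DfI (a b : nat) (W : 'M[R]_(a, b)) : R :=
  \sum_(i < b) \sum_(j < b) ((W^T *m W - 1%:M) i j) ^+ 2.

Definition psd_sym (m : nat) (S : 'M[R]_m) : Prop :=
  S^T = S /\ forall v : 'cV[R]_m, 0 <= (v^T *m S *m v) 0 0.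

Definition is_psd_sqrt (m : nat) (M S : 'M[R]_m) : Prop :=
  psd_sym S /\ S *m S = M.

(* eta is the nonincreasing list of the positive eigenvalues of M, counted
   with algebraic multiplicity (all other eigenvalues being 0):
   char_poly M = X^(m - size eta) * prod_(x <- eta) (X - x). *)
Definition pos_eigenvalues (m : nat) (M : 'M[R]_m) (eta : seq R) : Prop :=
  sorted (fun x y => y <= x) eta /\ all (fun x => 0 < x) eta /\
  (size eta <= m)%N /\
  char_poly M = 'X^(m - size eta) * \prod_(x <- eta) ('X - x%:P).

Definition nz_singvals (n b : nat) (Phi : 'M[R]_(n, b)) (sigma : seq R) : Prop :=
  exists lam, pos_eigenvalues (Phi^T *m Phi) lam /\ sigma = map Num.sqrt lam.

Definition psum (s : seq R) (k : nat) : R := \sum_(i < k) s`_i.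

Definition srank (delta : R) (s : seq R) : nat :=
  find (fun k => 1 - delta <= psum s k / psum s (size s)) (iota 0 (size s).+1).

End Defs.

(* Main.v *)
Require Import Defs.
From HB Require Import structures.
From mathcomp Require Import all_boot all_order all_algebra.
From mathcomp Require Import reals.
From mathcomp Require Import complex.
From mathcomp Require Import ring lra.
Import Order.TTheory GRing.Theory Num.Theory.
Local Open Scope ring_scope.

Section Helpers.
Local Open Scope sesquilinear_scope.
Lemma spec_roots (R : realType) (m : nat) (M : 'M[R]_m) (eta : seq R) :
  M^T = M -> pos_eigenvalues M eta ->
  let Mc := map_mx (real_complex R) M in
  exists P : 'M[R[i]]_m, exists D : 'rV[R[i]]_m,
    P *m P^t* = 1%:M /\ Mc = P^t* *m diag_mx D *m P /\
    forall j, D 0 j = 0 \/ exists2 e, e \in eta & D 0 j = (e%:C)%C.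
Proof.
move=> MT [_ [_ [_ cpM]]] Mc.
have McT : Mc^t* = Mc.
  apply/matrixP=> i j; rewrite !mxE.
  have -> : M j i = M i j by rewrite -[in RHS]MT mxE.
  by apply: conj_Creal; rewrite complex_real.
have Mn : Mc \is normalmx by apply/normalmxP; rewrite McT.
have /orthomx_spectralP McE := Mn.
set P := spectralmx Mc in McE; set D := spectral_diag Mc in McE.
have Pu : P \is unitarymx := spectral_unitarymx Mc.
have PPt : P *m P^t* = 1%:M by apply/unitarymxP.
rewrite invmx_unitary // in McE.
exists P, D; split => //; split => //.
move=> j.
have : eigenvalue Mc (D 0 j).
  apply/eigenvalueP; exists (delta_mx 0 j *m P).
    rewrite McE !mulmxA -(mulmxA _ P) PPt mulmx1.
    rewrite scalemxAl; congr (_ *m _); apply/matrixP => a b; rewrite mul_mx_diag !mxE.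
    case: (b =P j) => [->|/eqP nb]; rewrite ?eqxx /=.
      by rewrite mulrC.
    by rewrite andbF mul0r mulr0.
  apply/eqP => /(congr1 (mulmx^~ (P^t*))); rewrite -mulmxA PPt mulmx1 mul0mx.
  by move/matrixP/(_ 0 j); rewrite !mxE !eqxx /= => /eqP; rewrite oner_eq0.
rewrite eigenvalue_root_char -map_char_poly cpM rmorphM /= map_polyXn.
rewrite map_prod_XsubC rootM /root hornerXn expf_eq0 => /orP [/andP [_ /eqP ->]|]; first by left.
rewrite -/(root _ _) -(big_map (real_complex R) xpredT (fun x => ('X - x%:P))) root_prod_XsubC => /mapP [e he ->]; right; by exists e.
Qed.

Lemma sorted_bounds (R : realType) (s : seq R) x :
  sorted (fun x y => y <= x) s -> x \in s -> s`_(size s).-1 <= x /\ x <= s`_0.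
Proof.
move=> ss xs.
have tr : transitive (fun x y : R => y <= x) by move=> a b c h1 h2; exact: le_trans h2 h1.
have rf : reflexive (fun x y : R => y <= x) by move=> a; exact: lexx.
have hi : (index x s < size s)%N by rewrite index_mem.
have <- := nth_index 0 xs.
have sp : (0 < size s)%N by case: (size s) hi.
split.
- apply: (sorted_leq_nth tr rf 0 ss) => //; rewrite ?inE ?ltn_predL //.
  by rewrite -ltnS prednK.
- by apply: (sorted_leq_nth tr rf 0 ss).
Qed.

Lemma quad_bounds (R : realType) (m : nat) (M : 'M[R]_m) (eta : seq R) :
  M^T = M -> pos_eigenvalues M eta ->
  forall x : 'rV[R]_m,
   eta`_(size eta).-1 * (x *m M *m x^T) 0 0 <= (x *m M *m M *m x^T) 0 0 /\
   (x *m M *m M *m x^T) 0 0 <= eta`_0 * (x *m M *m x^T) 0 0.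
Proof.
move=> MT pe x.
have [srt [pos _]] := pe.
have [P [D [PPt [McE Dr]]]] := @spec_roots R m M eta MT pe.
set xc := map_mx (real_complex R) x.
set w := xc *m P^t*.
have hw : P *m xc^T = w^t*.
  apply/matrixP => i k; rewrite !mxE rmorph_sum; apply: eq_bigr => j _.
  rewrite !mxE rmorphM /= conjCK conj_Creal ?complex_real // mulrC.
  by rewrite (ord1 k).
have hmap (A : 'M[R]_m) : ((x *m A *m x^T) 0 0)%:C%C
    = (xc *m map_mx (real_complex R) A *m xc^T) 0 0.
  by rewrite /xc map_trmx -!map_mxM [RHS]mxE.
have hdiag (d : 'rV[R[i]]_m) : (w *m diag_mx d *m w^t*) 0 0
    = \sum_j d 0 j * (w 0 j * (w 0 j)^*).
  rewrite mxE; apply: eq_bigr => j _; rewrite mul_mx_diag !mxE.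
  by rewrite mulrAC mulrC.
have hq1 : ((x *m M *m x^T) 0 0)%:C%C = \sum_j D 0 j * (w 0 j * (w 0 j)^*).
  by rewrite hmap -/(map_mx _ M) McE !mulmxA -/w -(mulmxA _ P) hw hdiag.
have hq2 : ((x *m M *m M *m x^T) 0 0)%:C%C
    = \sum_j (D 0 j * D 0 j) * (w 0 j * (w 0 j)^*).
  rewrite -(mulmxA x M) hmap map_mxM McE !mulmxA -/w -(mulmxA (w *m diag_mx D) P) PPt mulmx1.
  rewrite -(mulmxA _ P) hw -(mulmxA w) mulmx_diag hdiag.
  by apply: eq_bigr => j _; rewrite mxE.
split; rewrite -lecR rmorphM /= hq1 hq2 mulr_sumr -subr_ge0 -sumrB;
  apply: sumr_ge0 => j _; have c0 := mul_conjC_ge0 (w 0 j);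
  (case: (Dr j) => [->|[e he ->]]; first by rewrite !mul0r ?mulr0 subrr);
  have [lo hi] := @sorted_bounds R eta e srt he; have e0 := (allP pos) e he.
- have -> : (e%:C * e%:C * (w 0 j * (w 0 j)^*) -
      (eta`_(size eta).-1)%:C * (e%:C * (w 0 j * (w 0 j)^*)))%C
      = ((e * e - eta`_(size eta).-1 * e)%:C * (w 0 j * (w 0 j)^*))%C.
    by rewrite rmorphB !rmorphM /=; ring.
  by apply: mulr_ge0 => //; rewrite ler0c; nra.
- have -> : ((eta`_0)%:C * (e%:C * (w 0 j * (w 0 j)^*)) -
      e%:C * e%:C * (w 0 j * (w 0 j)^*))%C
      = ((eta`_0 * e - e * e)%:C * (w 0 j * (w 0 j)^*))%C.
    by rewrite rmorphB !rmorphM /=; ring.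
  by apply: mulr_ge0 => //; rewrite ler0c; nra.
Qed.

Lemma gram_bound (R : realType) (a b : nat) (W : 'M[R]_(a,b)) (y : 'rV[R]_b) :
  (1 - Num.sqrt (DfI W)) * (y *m y^T) 0 0 <= (y *m (W^T *m W) *m y^T) 0 0 /\
  (y *m (W^T *m W) *m y^T) 0 0 <= (1 + Num.sqrt (DfI W)) * (y *m y^T) 0 0.
Proof.
set E := W^T *m W - 1%:M.
set s := (y *m y^T) 0 0.
set eps := Num.sqrt (DfI W).
set T := \sum_i \sum_j E i j * (y 0 i * y 0 j).
have hG : (y *m (W^T *m W) *m y^T) 0 0 = s + T.
  have -> : W^T *m W = E + 1%:M by rewrite /E subrK.
  rewrite mulmxDr mulmx1 mulmxDl mxE addrC; congr (_ + _).
  rewrite mxE /T exchange_big /=; apply: eq_bigr => j _.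
  rewrite !mxE big_distrl /=; apply: eq_bigr => i _; rewrite !mxE; ring.
have hTdef : T = \sum_i \sum_j E i j * (y 0 i * y 0 j) by [].
clearbody T.
have hs : s = \sum_i y 0 i ^+ 2.
  by rewrite /s mxE; apply: eq_bigr => i _; rewrite !mxE expr2.
have hD : DfI W = \sum_i \sum_j E i j ^+ 2 by [].
have D0 : 0 <= DfI W by rewrite hD; apply: sumr_ge0 => i _; apply: sumr_ge0 => j _; apply: sqr_ge0.
have s0 : 0 <= s by rewrite hs; apply: sumr_ge0 => i _; apply: sqr_ge0.
have e0 : 0 <= eps by apply: sqrtr_ge0.
have e2 : eps ^+ 2 = DfI W by rewrite sqr_sqrtr.
rewrite hG.
have [sz|spos] := eqVneq s 0.
  have yz : forall i, y 0 i = 0.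
    move=> i; apply/eqP; rewrite -sqrf_eq0; apply/eqP.
    have := @psumr_eq0P _ _ xpredT (fun i => y 0 i ^+ 2) (fun i _ => sqr_ge0 _).
    by rewrite -hs => /(_ sz i isT).
  have -> : T = 0 by rewrite hTdef big1 // => i _; rewrite big1 // => j _; rewrite !yz !mul0r mulr0.
  rewrite sz; lra.
have sp : 0 < s by rewrite lt_def spos.
have expd : \sum_i \sum_j (s ^+ 2 * E i j - T * (y 0 i * y 0 j)) ^+ 2
   = s ^+ 4 * DfI W - 2 * s ^+ 2 * T * (\sum_i \sum_j E i j * (y 0 i * y 0 j)) + T ^+ 2 * (s * s).
  have ss : s * s = \sum_i \sum_j (y 0 i * y 0 j) ^+ 2.
    rewrite {1}hs mulr_suml; apply: eq_bigr => i _; rewrite hs mulr_sumr.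
    by apply: eq_bigr => j _; ring.
  rewrite ss hD !mulr_sumr -sumrB -big_split /=; apply: eq_bigr => i _.
  rewrite !mulr_sumr -sumrB -big_split /=; apply: eq_bigr => j _; ring.
have ge : 0 <= \sum_i \sum_j (s ^+ 2 * E i j - T * (y 0 i * y 0 j)) ^+ 2.
  by apply: sumr_ge0 => i _; apply: sumr_ge0 => j _; apply: sqr_ge0.
rewrite expd -hTdef in ge.
have : 0 <= s ^+ 2 * (s ^+ 2 * DfI W - T ^+ 2) 
  by move: ge; rewrite (_ : s ^+ 2 * (s ^+ 2 * DfI W - T ^+ 2) = s ^+ 4 * DfI W - 2 * s ^+ 2 * T * T + T ^+ 2 * (s * s)) //; ring.
rewrite pmulr_rge0 ?exprn_gt0 // subr_ge0 -e2 => hT.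
have hT' : T ^+ 2 <= (eps * s) ^+ 2 by rewrite exprMn mulrC.
have es : 0 <= eps * s by apply: mulr_ge0.
split; nra.
Qed.

Lemma srank_bound (R : realType) (s : seq R) (d : nat) (delta kappa : R) :
  size s = d -> (1 <= d)%N -> sorted (fun x y => y <= x) s ->
  all (fun x => 0 < x) s ->
  0 <= delta <= 1 -> 0 < kappa -> s`_0 <= kappa * s`_(d.-1) ->
  Num.ceil (((1 - delta) * d%:R) / (delta * kappa + (1 - delta)))
    <= (srank delta s)%:Z.
Proof.
move=> sz d1 srt pos /andP [dl0 dl1] k0 hk.
have tr : transitive (fun x y : R => y <= x) by move=> a b c h1 h2; exact: le_trans h2 h1.
have rf : reflexive (fun x y : R => y <= x) by move=> a; exact: lexx.
have sle (i j : nat) : (i <= j)%N -> (j < d)%N -> s`_j <= s`_i.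
  move=> ij jd; apply: (sorted_leq_nth tr rf 0 srt) => //; rewrite inE sz //.
  exact: leq_ltn_trans ij jd.
have spos (i : nat) : (i < d)%N -> 0 < s`_i.
  by move=> id; apply: (allP pos); apply: mem_nth; rewrite sz.
have hd1 : (d.-1 < d)%N by rewrite ltn_predL.
have sd0 := spos _ hd1.
have psumE (k : nat) : psum s k = \sum_(0 <= i < k) s`_i by rewrite /psum big_mkord.
have tot0 : 0 < psum s d.
  rewrite psumE -(prednK d1) big_nat_recl //.
  have p0 := spos 0%N d1.
  have : 0 <= \sum_(0 <= i < d.-1) s`_i.+1.
    rewrite big_mkord; apply: sumr_ge0 => i _; apply/ltW/spos.
    by have := ltn_ord i; rewrite -ltnS prednK.
  lra.
set pr := fun k => 1 - delta <= psum s k / psum s d.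
have prd : pr d by rewrite /pr divff ?gt_eqF //; lra.
have hh : has pr (iota 0 d.+1) by apply/hasP; exists d; rewrite // mem_iota add0n ltnS leqnn.
have srE : srank delta s = find pr (iota 0 d.+1) by rewrite /srank sz.
have kd : (srank delta s < d.+1)%N.
  by have := has_find pr (iota 0 d.+1); rewrite hh size_iota srE => <-.
have prk : pr (srank delta s).
  by have := nth_find 0 hh; rewrite nth_iota ?add0n -?srE // -srE.
move: kd prk; set k := srank delta s => kd prk.
rewrite ltnS in kd.
rewrite /pr ler_pdivlMr // in prk.
set A := psum s k in prk; set B := \sum_(k <= i < d) s`_i.
have hAB : psum s d = A + B by rewrite /A !psumE (big_cat_nat (leq0n k) kd).
have hA : A <= k%:R * s`_0.
  rewrite /A /psum.
  have -> : k%:R * s`_0 = \sum_(i < k) s`_0 by rewrite sumr_const card_ord mulr_natl.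
  apply: ler_sum => i _; apply: sle => //; exact: leq_trans (ltn_ord i) kd.
have hB : (d - k)%:R * s`_(d.-1) <= B.
  rewrite mulr_natl -sumr_const_nat /B; apply: ler_sum_nat => i /andP [_ id].
  apply: sle => //; by rewrite -ltnS prednK.
rewrite natrB // in hB.
rewrite hAB in prk.
have den0 : 0 < delta * kappa + (1 - delta) by nra.
have k0' : 0 <= (k%:R : R) by apply: ler0n.
have c1 : (1 - delta) * ((d%:R - k%:R) * s`_(d.-1)) <= (1 - delta) * B.
  by apply: ler_wpM2l => //; lra.
have c2 : delta * A <= delta * (k%:R * s`_0) by apply: ler_wpM2l.
have c3 : delta * k%:R * s`_0 <= delta * k%:R * (kappa * s`_(d.-1)).
  by apply: ler_wpM2l => //; apply: mulr_ge0.
have key : s`_(d.-1) * ((1 - delta) * (d%:R - k%:R) - delta * k%:R * kappa) <= 0.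
  have -> : s`_(d.-1) * ((1 - delta) * (d%:R - k%:R) - delta * k%:R * kappa) =
    (1 - delta) * ((d%:R - k%:R) * s`_(d.-1)) - delta * k%:R * (kappa * s`_(d.-1)) by ring.
  have e3 : delta * (k%:R * s`_0) = delta * k%:R * s`_0 by ring.
  lra.
rewrite pmulr_rle0 // in key.
rewrite ceil_le_int ler_pdivrMr //.
rewrite [X in _ <= X * _](_ : _ = k%:R) //; nra.
Qed.

Lemma rv_norm_gt0 (R : realType) (m : nat) (u : 'rV[R]_m) :
  u != 0 -> 0 < (u *m u^T) 0 0.
Proof.
move=> un0.
have hs : (u *m u^T) 0 0 = \sum_i u 0 i ^+ 2.
  by rewrite mxE; apply: eq_bigr => i _; rewrite !mxE expr2.
rewrite hs lt_def sumr_ge0 ?andbT; last by move=> i _; apply: sqr_ge0.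
apply: contra un0 => /eqP h; apply/eqP/matrixP => i j; rewrite (ord1 i) !mxE.
have := @psumr_eq0P _ _ xpredT (fun i => u 0 i ^+ 2) (fun i _ => sqr_ge0 _) h j isT.
by move/eqP; rewrite sqrf_eq0 => /eqP.
Qed.

Lemma eig_bounds (R : realType) (m : nat) (S M G : 'M[R]_m) (c eps e0 e1 l : R) :
  M^T = M -> 0 < c -> S *m S = G ->
  (forall x : 'rV_m, e0 * (x *m M *m x^T) 0 0 <= (x *m M *m M *m x^T) 0 0 /\
     (x *m M *m M *m x^T) 0 0 <= e1 * (x *m M *m x^T) 0 0) ->
  (forall y : 'rV_m, (1 - eps) * (y *m y^T) 0 0 <= (y *m G *m y^T) 0 0 /\
     (y *m G *m y^T) 0 0 <= (1 + eps) * (y *m y^T) 0 0) ->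
  0 < e1 -> 0 <= e0 -> 0 <= eps -> eps < 1 ->
  0 < l -> eigenvalue (S *m (c *: M) *m S) l ->
  c * (1 - eps) * e0 <= l /\ l <= c * (1 + eps) * e1.
Proof.
move=> MT c0 SSG hM hG e10 e00 eps0 eps1 l0 /eigenvalueP [v hv vn0].
set x := v *m S; set u := x *m M.
have hv' : l *: v = c *: (u *m S).
  by rewrite -hv /u /x !mulmxA -(scalemxAr c (v *m S) M) -scalemxAl.
have un0 : u != 0.
  apply: contra vn0 => /eqP u0.
  have : l *: v == 0 by rewrite hv' u0 mul0mx scaler0.
  by rewrite scaler_eq0 gt_eqF.
have hx : l *: x = c *: (u *m G).
  by rewrite /x scalemxAl hv' -scalemxAl -mulmxA SSG.
have huT : u^T = M *m x^T by rewrite /u trmx_mul MT.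
have hq : l * (x *m M *m x^T) 0 0 = c * (u *m G *m u^T) 0 0.
  have := congr1 (fun A => (A *m u^T) 0 0) hx.
  by rewrite /= -!scalemxAl [X in X = _ -> _]mxE [X in _ = X -> _]mxE huT mulmxA.
have hu2 : (x *m M *m M *m x^T) 0 0 = (u *m u^T) 0 0 by rewrite huT mulmxA.
have [m1 m2] := hM x; have [g1 g2] := hG u.
rewrite hu2 in m1 m2.
have q2p := @rv_norm_gt0 R m u un0.
move: hq m1 m2 g1 g2 q2p.
set q1 := (x *m M *m x^T) 0 0; set q2 := (u *m u^T) 0 0; set g := (u *m G *m u^T) 0 0.
move=> hq m1 m2 g1 g2 q2p.
have q1p : 0 < q1 by nra.
have h1 : c * ((1 - eps) * q2) <= c * g by apply: ler_wpM2l => //; apply: ltW.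
have h2 : c * (1 - eps) * (e0 * q1) <= c * (1 - eps) * q2.
  by apply: ler_wpM2l => //; apply: mulr_ge0; lra.
have h3 : c * g <= c * ((1 + eps) * q2) by apply: ler_wpM2l => //; apply: ltW.
have h4 : c * (1 + eps) * q2 <= c * (1 + eps) * (e1 * q1).
  by apply: ler_wpM2l => //; apply: mulr_ge0; lra.
split.
- rewrite -(ler_pM2r q1p); nra.
- rewrite -(ler_pM2r q1p); nra.
Qed.

Lemma pe_eig (R : realType) (m : nat) (M : 'M[R]_m) (eta : seq R) e :
  pos_eigenvalues M eta -> e \in eta -> eigenvalue M e.
Proof.
move=> [_ [_ [_ cp]]] he.
by rewrite eigenvalue_root_char cp rootM root_prod_XsubC he orbT.
Qed.

End Helpers.

Theorem theorem3 (R : realType) (n a b : nat)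
  (Z : 'M[R]_(n, a)) (W : 'M[R]_(a, b))
  (Q : 'M[R]_(a, b)) (S : 'M[R]_b)
  (d : nat) (eta sigma : seq R) (delta : R) :
  let Phi := Z *m W in
  let SigmaZ := n%:R^-1 *: (Z^T *m Z) in
  let eps := Num.sqrt (DfI W) in
  Q^T *m Q = 1%:M ->
  is_psd_sqrt (W^T *m W) S ->
  W = Q *m S ->
  d = \rank (Q^T *m SigmaZ *m Q) -> (1 <= d)%N ->
  pos_eigenvalues (Q^T *m SigmaZ *m Q) eta -> size eta = d ->
  nz_singvals Phi sigma -> size sigma = d ->
  0 <= delta <= 1 ->
  eps < 1 ->
  (Num.ceil (((1 - delta) * d%:R) /
      (delta * Num.sqrt ((1 + eps) / (1 - eps)) * Num.sqrt (eta`_0 / eta`_d.-1)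
       + (1 - delta))) <= (srank delta sigma)%:Z)
  /\
  (SigmaZ = 1%:M ->
   Num.ceil (((1 - delta) * d%:R) /
      (delta * Num.sqrt ((1 + eps) / (1 - eps)) + (1 - delta)))
   <= (srank delta sigma)%:Z).

Proof.
move=> Phi SigmaZ eps QtQ [[ST _] SS] WQS hd d1 pe szeta [lam [pl hsig]] szsig hdelta heps.
set M := Q^T *m SigmaZ *m Q in hd pe *.
have n0 : n != 0%N.
  apply/eqP => n0.
  have hi : (n%:R : R)^-1 = 0 by rewrite n0 mulr0n invr0.
  move: hd d1; rewrite /M /SigmaZ hi scale0r mulmx0 mul0mx mxrank0 => ->.
  by [].
have MT : M^T = M.
  rewrite /M /SigmaZ !trmx_mul trmxK linearZ /= trmx_mul trmxK !mulmxA.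
  by [].
have nM : Q^T *m (Z^T *m Z) *m Q = n%:R *: M.
  rewrite /M /SigmaZ -scalemxAr -scalemxAl scalerA mulfV ?scale1r //.
  by rewrite pnatr_eq0.
have hP : Phi^T *m Phi = S *m (n%:R *: M) *m S.
  by rewrite /Phi WQS !trmx_mul ST -nM !mulmxA.
have Dge : 0 <= eps := sqrtr_ge0 (DfI W).
have [srt [epos _]] := pe.
have szlam : size lam = d by rewrite -szsig hsig size_map.
have hd1 : (d.-1 < d)%N by rewrite ltn_predL.
have e0p : 0 < eta`_0 by apply: (allP epos); apply: mem_nth; rewrite szeta.
have edp : 0 < eta`_(d.-1) by apply: (allP epos); apply: mem_nth; rewrite szeta.
have eig l : l \in lam -> n%:R * (1 - eps) * eta`_(d.-1) <= l /\ l <= n%:R * (1 + eps) * eta`_0.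
  move=> hl.
  have l0 : 0 < l by have [_ [pos _]] := pl; exact: (allP pos).
  have ev : eigenvalue (Phi^T *m Phi) l by apply: (@pe_eig _ _ _ _ _ pl hl).
  rewrite hP in ev.
  have := @quad_bounds R b M eta MT pe; rewrite szeta => hM.
  apply: (@eig_bounds R b S M _ _ _ _ _ _ MT _ SS hM (@gram_bound R a b W) e0p (ltW edp) Dge heps l0 ev).
  by rewrite ltr0n lt0n.
have [lo _] : _ /\ _ := eig _ (mem_nth 0 (etrans (congr1 (fun k => (d.-1 < k)%N) szlam) hd1)).
have [_ hi] : _ /\ _ := eig _ (mem_nth 0 (etrans (congr1 (fun k => (0 < k)%N) szlam) d1)).
have [lsrt [lpos _]] := pl.
have lam0 : 0 < lam`_(d.-1) by apply: (allP lpos); apply: mem_nth; rewrite szlam.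
set C := (1 + eps) / (1 - eps).
set kappa := Num.sqrt C * Num.sqrt (eta`_0 / eta`_d.-1).
have C0 : 0 < C by rewrite /C divr_gt0 //; lra.
have kap0 : 0 < kappa by rewrite /kappa mulr_gt0 // sqrtr_gt0 // divr_gt0.
have sig0 : sigma`_0 = Num.sqrt lam`_0 by rewrite hsig (nth_map 0) // szlam.
have sigd : sigma`_(d.-1) = Num.sqrt lam`_(d.-1) by rewrite hsig (nth_map 0) // szlam.
have hk : sigma`_0 <= kappa * sigma`_(d.-1).
  have hab : 0 <= C * (eta`_0 / eta`_d.-1) by apply: mulr_ge0; [apply: ltW | apply: divr_ge0; apply: ltW].
  rewrite sig0 sigd /kappa -(sqrtrM _ (ltW C0)) -(sqrtrM _ hab) ler_sqrt; last by rewrite mulr_ge0 // ltW.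
  apply: (le_trans hi).
  have key : C * (eta`_0 / eta`_d.-1) * lam`_d.-1 - n%:R * (1 + eps) * eta`_0
     = (1 + eps) * eta`_0 / ((1 - eps) * eta`_d.-1) *
       (lam`_d.-1 - n%:R * (1 - eps) * eta`_d.-1).
    rewrite /C; field.
    by apply/andP; split; rewrite ?gt_eqF //; lra.
  rewrite -subr_ge0 key; apply: mulr_ge0; last by rewrite subr_ge0.
  apply: divr_ge0; first by apply: mulr_ge0; [lra | apply: ltW].
  by apply: mulr_ge0; [lra | apply: ltW].
have srt' : sorted (fun x y => y <= x) sigma.
  rewrite hsig sorted_map; apply: (sub_sorted _ lsrt) => x y /= h.
  exact: ler_wsqrtr.
have spos : all (fun x => 0 < x) sigma.
  rewrite hsig; apply/allP => x /mapP [y hy ->]; rewrite sqrtr_gt0.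
  exact: (allP lpos).
have main := @srank_bound R sigma d delta kappa szsig d1 srt' spos hdelta kap0 hk.
split.
  by move: main; rewrite /kappa mulrA.
move=> SI.
have M1 : M = 1%:M by rewrite /M SI mulmx1 QtQ.
have eta1 e : e \in eta -> e = 1.
  move=> he; have := @pe_eig _ _ _ _ _ pe he; rewrite M1 => /eigenvalueP [v].
  rewrite mulmx1 => hv vn0; apply/eqP; rewrite eq_sym -subr_eq0.
  apply: contraR vn0 => h; apply/eqP.
  have : (1 - e) *: v = 0 by rewrite scalerBl scale1r -{1}hv subrr.
  by move/eqP; rewrite scaler_eq0 (negPf h) /= => /eqP.
have e01 : eta`_0 = 1 by apply: eta1; apply: mem_nth; rewrite szeta.
have ed1 : eta`_d.-1 = 1 by apply: eta1; apply: mem_nth; rewrite szeta.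
by move: main; rewrite /kappa e01 ed1 divr1 sqrtr1 mulr1.
Qed.
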